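(* Let $n\in\mathbb{N}$ and let $K\subset\mathbb{R}^n$ be a strictly convex convex body (not necessarily $0$-symmetric). Then \[ G(K)\le 2\bigl(2^{n-1}-1\bigr)\left\lceil \tfrac{2}{3}\bigl(G(\operatorname{int}K)+1\bigr)\right\rceil + G(\operatorname{int}K)+2. \]
   Context: A convex body in $\mathbb{R}^n$ is a compact convex set with nonempty interior. It is strictly convex if its boundary contains no nondegenerate line segment. For $S\subset\mathbb{R}^n$, $G(S)=|S\cap\mathbb{Z}^n|$, and $\operatorname{int}K$ denotes the interior of $K$. $\lceil x\rceil$ is the smallest integer $\ge x$. *)

(* Defs.v *)
From Stdlib Require Import Reals Lra Lia ZArith List.
Open Scope R_scope.

(* Points of R^n are modelled as functions nat -> R vanishing at indices >= n. *)
Definition point := nat -> R.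

Definition inRn (n : nat) (x : point) : Prop :=
  forall i : nat, (n <= i)%nat -> x i = 0.

Fixpoint sqdist (n : nat) (x y : point) : R :=
  match n with
  | O => 0
  | S m => sqdist m x y + (x m - y m) ^ 2
  end.

Definition seg (x y : point) (t : R) : point := fun i => t * x i + (1 - t) * y i.

Definition is_convex (n : nat) (K : point -> Prop) : Prop :=
  forall x y t, K x -> K y -> 0 <= t <= 1 -> K (seg x y t).

Definition is_bounded (n : nat) (K : point -> Prop) : Prop :=
  exists M : R, forall x, K x -> sqdist n x (fun _ => 0) <= M.

Definition is_closed (n : nat) (K : point -> Prop) : Prop :=
  forall x, inRn n x ->
    (forall eps, 0 < eps -> exists y, K y /\ sqdist n x y < eps) -> K x.

Definition int_pts (n : nat) (K : point -> Prop) (x : point) : Prop :=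
  inRn n x /\ exists eps, 0 < eps /\
    forall y, inRn n y -> sqdist n x y < eps -> K y.

Definition convex_body (n : nat) (K : point -> Prop) : Prop :=
  (forall x, K x -> inRn n x) /\ is_convex n K /\ is_bounded n K /\
  is_closed n K /\ exists x, int_pts n K x.

Definition boundary (n : nat) (K : point -> Prop) (x : point) : Prop :=
  K x /\ ~ int_pts n K x.

Definition strictly_convex (n : nat) (K : point -> Prop) : Prop :=
  forall x y, x <> y ->
    ~ (forall t, 0 <= t <= 1 -> boundary n K (seg x y t)).

Definition lattice_point (n : nat) (x : point) : Prop :=
  inRn n x /\ forall i, (i < n)%nat -> exists z : Z, x i = IZR z.

Definition card (P : point -> Prop) (m : nat) : Prop :=
  exists l : list point, NoDup l /\ length l = m /\ forall x, List.In x l <-> P x.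

Definition G_eq (n : nat) (S : point -> Prop) (m : nat) : Prop :=
  card (fun x => lattice_point n x /\ S x) m.

(* ceiling: up x is the integer with x < up x <= x + 1, so floor y = up y - 1
   and ceil x = - floor (- x) = 1 - up (- x). *)
Definition Rceil (x : R) : Z := (1 - up (- x))%Z.

(* Main.v *)
Require Import Defs.
From Stdlib Require Import Reals ZArith.
From Stdlib Require Import Lra Lia List Classical FunctionalExtensionality Sorting.Sorted.
Import ListNotations.
Open Scope R_scope.

Lemma sqdist_scale n (x y x' y' : point) c :
  (forall i, (i < n)%nat -> x i - y i = c * (x' i - y' i)) ->
  sqdist n x y = c^2 * sqdist n x' y'.
Proof.
  induction n; intros H; simpl. ring.
  rewrite IHn by (intros; apply H; lia). rewrite (H n) by lia. ring.
Qed.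

Lemma sqdist_refl n x : sqdist n x x = 0.
Proof. induction n; simpl; [reflexivity| rewrite IHn; ring]. Qed.

Lemma sqdist_nonneg n x y : 0 <= sqdist n x y.
Proof. induction n; simpl. lra. apply Rplus_le_le_0_compat; auto. apply pow2_ge_0. Qed.

Lemma int_K n K x : int_pts n K x -> K x.
Proof.
  intros [Hx [eps [He H]]]. apply H; auto. rewrite sqdist_refl; lra.
Qed.

Lemma cone n K w y s :
  is_convex n K -> (forall x, K x -> inRn n x) ->
  int_pts n K w -> K y -> 0 <= s < 1 -> int_pts n K (seg y w s).
Proof.
  intros Hc HK Hw Hy Hs.
  destruct Hw as [Hwn [eps [He Hb]]].
  assert (Hyn := HK y Hy).
  split.
  { intros i Hi. unfold seg. rewrite (Hwn i Hi), (Hyn i Hi). ring. }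
  exists ((1-s)^2 * eps). split. { apply Rmult_lt_0_compat; [|lra]. nra. }
  intros v Hv Hd.
  set (u := fun i => (v i - s * y i) / (1 - s)).
  assert (Hu : K u).
  { apply Hb.
    - intros i Hi. unfold u. rewrite (Hv i Hi), (Hyn i Hi). field. lra.
    - rewrite (sqdist_scale n w u (seg y w s) v (1/(1-s))).
      + assert (0 < (1/(1-s))^2) by (apply pow_lt; apply Rdiv_lt_0_compat; lra).
        apply Rmult_lt_compat_l with (r := (1/(1-s))^2) in Hd; auto.
        replace ((1/(1-s))^2 * ((1-s)^2*eps)) with eps in Hd; [lra|].
        field. lra.
      + intros i _. unfold u, seg. field. lra. }
  assert (Hveq : v = seg y u s).
  { apply functional_extensionality; intro i. unfold seg, u. field. lra. }
  rewrite Hveq. apply Hc; auto. lra.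
Qed.

Lemma mid_int n K x y :
  convex_body n K -> strictly_convex n K -> K x -> K y -> x <> y ->
  int_pts n K (seg x y (1/2)).
Proof.
  intros [HK [Hc _]] Hsc Hx Hy Hxy.
  apply NNPP; intro Hm.
  apply (Hsc x y Hxy). intros t Ht.
  split. { apply Hc; auto. }
  intro Hint. apply Hm.
  destruct (Rle_lt_dec (1/2) t) as [Ht2|Ht2].
  - set (s := 1 - 1/(2*t)).
    assert (E : seg x y (1/2) = seg y (seg x y t) s).
    { apply functional_extensionality; intro i. unfold seg, s. field. lra. }
    rewrite E. apply cone; auto. unfold s. split.
    + assert (1/(2*t) <= 1). { apply Rmult_le_reg_r with (2*t); [lra|].
        unfold Rdiv. rewrite Rmult_assoc, Rinv_l by lra. lra. } lra.
    + assert (0 < 1/(2*t)) by (apply Rdiv_lt_0_compat; lra). lra.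
  - set (s := 1 - 1/(2*(1-t))).
    assert (E : seg x y (1/2) = seg x (seg x y t) s).
    { apply functional_extensionality; intro i. unfold seg, s. field. lra. }
    rewrite E. apply cone; auto. unfold s. split.
    + assert (1/(2*(1-t)) <= 1). { apply Rmult_le_reg_r with (2*(1-t)); [lra|].
        unfold Rdiv. rewrite Rmult_assoc, Rinv_l by lra. lra. } lra.
    + assert (0 < 1/(2*(1-t))) by (apply Rdiv_lt_0_compat; lra). lra.
Qed.

Definition mid (x y : point) : point := seg x y (1/2).

Definition ltl (n : nat) (x y : point) : Prop :=
  exists k, (k < n)%nat /\ (forall i, (i < k)%nat -> x i = y i) /\ x k < y k.

Lemma ltl_irrefl n x : ~ ltl n x x.
Proof. intros [k [_ [_ H]]]. lra. Qed.

Lemma ltl_trans n x y z : ltl n x y -> ltl n y z -> ltl n x z.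
Proof.
  intros [k1 [H1 [E1 L1]]] [k2 [H2 [E2 L2]]].
  destruct (lt_eq_lt_dec k1 k2) as [[C|C]|C].
  - exists k1. split; auto. split.
    + intros i Hi. rewrite E1, E2 by lia. auto.
    + rewrite <- (E2 k1 C). auto.
  - subst. exists k2. split; auto. split.
    + intros i Hi. rewrite E1, E2 by lia. auto.
    + lra.
  - exists k2. split; auto. split.
    + intros i Hi. rewrite E1, E2 by lia. auto.
    + rewrite (E1 k2 C). auto.
Qed.

Lemma ltl_midl n x y z : ltl n x y -> ltl n (mid x z) (mid y z).
Proof.
  intros [k [H [E L]]]. exists k. split; auto. split.
  - intros i Hi. unfold mid, seg. rewrite E; auto.
  - unfold mid, seg. lra.
Qed.

Lemma ltl_midr n x y z : ltl n x y -> ltl n (mid z x) (mid z y).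
Proof.
  intros [k [H [E L]]]. exists k. split; auto. split.
  - intros i Hi. unfold mid, seg. rewrite E; auto.
  - unfold mid, seg. lra.
Qed.

Lemma first_diff (x y : point) k :
  (exists i, (i < k)%nat /\ x i <> y i) ->
  exists j, (j < k)%nat /\ x j <> y j /\ forall i, (i < j)%nat -> x i = y i.
Proof.
  induction k; intros [i [Hi Hd]]. lia.
  destruct (classic (exists i, (i < k)%nat /\ x i <> y i)) as [C|C].
  - destruct (IHk C) as [j [? [? ?]]]. exists j. repeat split; auto.
  - exists k. assert (i = k) by (destruct (Nat.eq_dec i k); auto; exfalso; apply C; exists i; split; auto; lia).
    subst. repeat split; auto.
    intros i' Hi'. apply NNPP; intro N. apply C. exists i'. split; auto.
Qed.

Lemma ltl_total n x y : inRn n x -> inRn n y -> x <> y -> ltl n x y \/ ltl n y x.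
Proof.
  intros Hx Hy Hxy.
  assert (exists i, (i < n)%nat /\ x i <> y i).
  { apply NNPP; intro N. apply Hxy. apply functional_extensionality; intro i.
    destruct (Nat.lt_ge_cases i n).
    - apply NNPP; intro D. apply N. exists i; auto.
    - rewrite Hx, Hy; auto. }
  destruct (first_diff x y n H) as [j [Hj [D E]]].
  destruct (Rtotal_order (x j) (y j)) as [L|[L|L]].
  - left. exists j; auto.
  - contradiction.
  - right. exists j. repeat split; auto. intros; symmetry; auto.
Qed.

Lemma SS_NoDup n l : StronglySorted (ltl n) l -> NoDup l.
Proof.
  induction 1; constructor; auto.
  intro Hin. rewrite Forall_forall in H0. apply (ltl_irrefl n a); auto.
Qed.

Lemma insert_exists n x s :
  inRn n x -> (forall y, In y s -> inRn n y) -> ~ In x s ->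
  StronglySorted (ltl n) s ->
  exists s', StronglySorted (ltl n) s' /\ length s' = S (length s) /\
    (forall y, In y s' <-> y = x \/ In y s).
Proof.
  intros Hx. induction s as [|a s IH]; intros Hs Hn HS.
  - exists [x]. split. { constructor; auto. } split; auto.
    intros y; simpl; intuition.
  - inversion HS; subst.
    assert (Hxa : x <> a) by (intro; subst; apply Hn; left; auto).
    destruct (ltl_total n x a Hx (Hs a (or_introl eq_refl)) Hxa) as [L|L].
    + exists (x :: a :: s). split.
      { constructor; auto. constructor; auto.
        rewrite Forall_forall in *. intros z Hz. apply ltl_trans with a; auto. }
      split; auto. intros y; simpl; intuition.
    + destruct IH as [s'' [G1 [G2 G3]]]; auto.
      { intros; apply Hs; right; auto. }
      { intro; apply Hn; right; auto. }
      exists (a :: s''). split.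
      { constructor; auto. rewrite Forall_forall in *. intros z Hz.
        apply G3 in Hz. destruct Hz; subst; auto. }
      split. simpl; auto. intros y. simpl. rewrite G3. intuition.
Qed.

Lemma sort_exists n l :
  NoDup l -> (forall y, In y l -> inRn n y) ->
  exists s, StronglySorted (ltl n) s /\ length s = length l /\ (forall y, In y s <-> In y l).
Proof.
  induction l as [|x l IH]; intros Hd Hn.
  - exists []. split; [constructor|]. split; auto. intuition.
  - inversion Hd as [|? ? Hnx Hdl]; subst.
    destruct IH as [s [H1 [H2 H3]]]; auto. { intros; apply Hn; right; auto. }
    destruct (insert_exists n x s) as [s' [A [B C]]]; auto.
    { apply Hn; left; auto. }
    { intros y Hy. apply Hn. right. apply H3; auto. }
    { rewrite H3; auto. }
    exists s'. split; auto. split. simpl; lia.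
    intros y. rewrite C, H3. simpl. intuition.
Qed.

Fixpoint zz (l : list point) : list point :=
  match l with
  | a :: ((b :: r) as t) =>
      match r with
      | [] => [mid a b]
      | c :: _ => mid a b :: mid a c :: zz t
      end
  | _ => []
  end.

Lemma zz_len l : (2 <= length l)%nat -> length (zz l) = (2 * length l - 3)%nat.
Proof.
  induction l as [|a t IH]; simpl; intros H. lia.
  destruct t as [|b r]. simpl in H; lia.
  destruct r as [|c r']. reflexivity.
  simpl length in *. rewrite IH by (simpl; lia). simpl. lia.
Qed.

Lemma zz_sorted n l : StronglySorted (ltl n) l ->
  StronglySorted (ltl n) (zz l) /\
  (forall b c r, l = b :: c :: r -> exists t, zz l = mid b c :: t).
Proof.
  induction l as [|a t IH]; intros HS.
  - split. constructor. intros; discriminate.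
  - inversion HS as [|? ? HS' HF]; subst.
    destruct (IH HS') as [IH1 IH2].
    destruct t as [|b r]. { split. constructor. intros; discriminate. }
    destruct r as [|c r'].
    + split. { simpl. constructor; constructor. }
      intros b' c' r0 E. inversion E; subst. exists []. reflexivity.
    + inversion HF as [|? ? Hab HF2]; subst.
      inversion HF2 as [|? ? Hac _]; subst.
      inversion HS' as [|? ? _ HFb]; subst.
      inversion HFb as [|? ? Hbc _]; subst.
      destruct (IH2 b c r' eq_refl) as [t0 Et0].
      split.
      * change (zz (a :: b :: c :: r')) with (mid a b :: mid a c :: zz (b :: c :: r')).
        assert (Hall : forall e, In e (zz (b :: c :: r')) -> ltl n (mid a c) e).
        { intros e He. rewrite Et0 in He. destruct He as [He|He].
          - subst. apply ltl_midl; auto.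
          - rewrite Et0 in IH1. inversion IH1 as [|? ? _ HF3]; subst.
            rewrite Forall_forall in HF3. apply ltl_trans with (mid b c).
            apply ltl_midl; auto. auto. }
        constructor. constructor; auto. rewrite Forall_forall; auto.
        constructor. apply ltl_midr; auto.
        rewrite Forall_forall. intros e He. apply ltl_trans with (mid a c); auto.
        apply ltl_midr; auto.
      * intros b' c' r0 E. inversion E; subst. eexists; reflexivity.
Qed.

Lemma zz_elems n l : StronglySorted (ltl n) l ->
  forall e, In e (zz l) -> exists u v, In u l /\ In v l /\ ltl n u v /\ e = mid u v.
Proof.
  induction l as [|a t IH]; intros HS e He. destruct He.
  inversion HS as [|? ? HS' HF]; subst.
  destruct t as [|b r]. destruct He.
  inversion HF as [|? ? Hab HF2]; subst.
  destruct r as [|c r'].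
  - destruct He as [He|[]]. subst. exists a, b. simpl; auto 6.
  - inversion HF2 as [|? ? Hac _]; subst.
    destruct He as [He|[He|He]].
    + subst. exists a, b. simpl; auto 6.
    + subst. exists a, c. simpl; auto 7.
    + destruct (IH HS' e He) as [u [v [A [B [C D]]]]].
      exists u, v. repeat split; auto; right; auto.
Qed.

Lemma SS_eq n l1 l2 : StronglySorted (ltl n) l1 -> StronglySorted (ltl n) l2 ->
  (forall x, In x l1 <-> In x l2) -> l1 = l2.
Proof.
  revert l2. induction l1 as [|a t IH]; intros l2 H1 H2 E.
  - destruct l2 as [|b t']; auto. exfalso. apply (proj2 (E b)). left; auto.
  - destruct l2 as [|b t']. exfalso. apply (proj1 (E a)). left; auto.
    inversion H1 as [|? ? H1' F1]; subst. inversion H2 as [|? ? H2' F2]; subst.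
    rewrite Forall_forall in F1, F2.
    assert (a = b).
    { destruct (proj1 (E a) (or_introl eq_refl)) as [?|Ha]; auto.
      destruct (proj2 (E b) (or_introl eq_refl)) as [?|Hb]; auto.
      exfalso. apply (ltl_irrefl n a). apply ltl_trans with b; auto. }
    subst. f_equal. apply IH; auto.
    intros x. split; intros Hx.
    + destruct (proj1 (E x) (or_intror Hx)) as [?|?]; auto. subst.
      exfalso. apply (ltl_irrefl n x); auto.
    + destruct (proj2 (E x) (or_intror Hx)) as [?|?]; auto. subst.
      exfalso. apply (ltl_irrefl n x); auto.
Qed.

Fixpoint codeF (x : point) (k : nat) : list bool :=
  match k with O => [] | S k => Z.even (up (x k)) :: codeF x k end.

Fixpoint all_codes (k : nat) : list (list bool) :=
  match k with
  | O => [[]]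
  | S k => map (cons true) (all_codes k) ++ map (cons false) (all_codes k)
  end.

Lemma codeF_len x k : length (codeF x k) = k.
Proof. induction k; simpl; auto. Qed.

Lemma all_codes_len k : length (all_codes k) = (2 ^ k)%nat.
Proof. induction k; simpl; auto. rewrite length_app, !length_map, IHk. lia. Qed.

Lemma all_codes_in k b : length b = k -> In b (all_codes k).
Proof.
  revert b; induction k; intros b Hb.
  - destruct b; [left; auto| discriminate].
  - destruct b as [|x b]; [discriminate|]. simpl in Hb. simpl. apply in_or_app.
    destruct x; [left|right]; apply in_map; apply IHk; lia.
Qed.

Lemma all_codes_nodup k : NoDup (all_codes k).
Proof.
  induction k; simpl. constructor; [intros []|constructor].
  apply NoDup_app.
  - apply NoDup_map_inv with (f := @tl bool). rewrite map_map. simpl. rewrite map_id. auto.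
  - apply NoDup_map_inv with (f := @tl bool). rewrite map_map. simpl. rewrite map_id. auto.
  - intros x H1 H2. apply in_map_iff in H1, H2.
    destruct H1 as [? [E1 _]]. destruct H2 as [? [E2 _]]. subst. discriminate.
Qed.

Lemma codeF_eq k x y : codeF x k = codeF y k ->
  forall i, (i < k)%nat -> Z.even (up (x i)) = Z.even (up (y i)).
Proof.
  induction k; simpl; intros E i Hi. lia.
  inversion E. destruct (Nat.eq_dec i k). subst; auto. apply IHk; auto; lia.
Qed.

Lemma up_IZR z : up (IZR z) = (z + 1)%Z.
Proof. symmetry. apply tech_up; rewrite plus_IZR; lra. Qed.

Lemma same_code_lattice n x y : lattice_point n x -> lattice_point n y ->
  codeF x n = codeF y n -> lattice_point n (mid x y).
Proof.
  intros [Hx Lx] [Hy Ly] E. split.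
  - intros i Hi. unfold mid, seg. rewrite Hx, Hy by auto. ring.
  - intros i Hi. destruct (Lx i Hi) as [z1 E1]. destruct (Ly i Hi) as [z2 E2].
    pose proof (codeF_eq n x y E i Hi) as P. rewrite E1, E2, !up_IZR in P.
    assert (Z.even (z1 - z2) = true).
    { replace (z1 - z2)%Z with ((z1+1) - (z2+1))%Z by ring. rewrite Z.even_sub, P.
      destruct (Z.even (z2+1)); auto. }
    apply Z.even_spec in H. destruct H as [k Hk].
    exists (z2 + k)%Z. unfold mid, seg. rewrite E1, E2, plus_IZR.
    assert (IZR z1 = IZR z2 + 2 * IZR k).
    { replace z1 with (z2 + 2*k)%Z by lia. rewrite plus_IZR, mult_IZR. auto. }
    lra.
Qed.

Section Main.
Variables (n : nat) (K : point -> Prop) (gi : nat) (lI : list point).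
Hypotheses (HK : convex_body n K) (Hsc : strictly_convex n K) (HlI : NoDup lI)
  (HlIlen : length lI = gi)
  (HlIin : forall x, In x lI <-> lattice_point n x /\ int_pts n K x).

Lemma class_zz cl :
  NoDup cl -> (forall x, In x cl -> lattice_point n x /\ K x) ->
  (forall x y, In x cl -> In y cl -> codeF x n = codeF y n) ->
  (2 <= length cl)%nat ->
  exists s, StronglySorted (ltl n) s /\ length s = length cl /\
    (forall y, In y s <-> In y cl) /\ NoDup (zz s) /\
    length (zz s) = (2 * length cl - 3)%nat /\ incl (zz s) lI.
Proof.
  intros Hd Hin Hc H2.
  destruct (sort_exists n cl Hd) as [s [S1 [S2 S3]]].
  { intros y Hy. apply (Hin y Hy). }
  exists s. split; [auto|]. split; [auto|]. split; [auto|]. split.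
  { apply (SS_NoDup n). apply (zz_sorted n s S1). } split.
  { rewrite zz_len; lia. }
  - intros e He. destruct (zz_elems n s S1 e He) as [u [v [U [V [L E]]]]]. subst.
    apply S3 in U, V. apply HlIin. split.
    + apply same_code_lattice; [apply Hin; auto | apply Hin; auto | apply Hc; auto].
    + apply mid_int; auto. apply Hin; auto. apply Hin; auto.
      intro; subst; apply (ltl_irrefl n v); auto.
Qed.

Lemma class_bound cl :
  NoDup cl -> (forall x, In x cl -> lattice_point n x /\ K x) ->
  (forall x y, In x cl -> In y cl -> codeF x n = codeF y n) ->
  (2 * length cl <= gi + 3)%nat.
Proof.
  intros Hd Hin Hc.
  destruct (Nat.lt_ge_cases (length cl) 2). lia.
  destruct (class_zz cl Hd Hin Hc H) as [s [_ [_ [_ [A [B C]]]]]].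
  pose proof (NoDup_incl_length A C). lia.
Qed.

End Main.

Definition clf (F : point -> list bool) (c : list bool) (l : list point) :=
  filter (fun x => if list_eq_dec Bool.bool_dec (F x) c then true else false) l.

Lemma clf_in F c l x : In x (clf F c l) <-> In x l /\ F x = c.
Proof.
  unfold clf. rewrite filter_In. destruct (list_eq_dec Bool.bool_dec (F x) c); split; intros [? ?]; split; auto; try discriminate; congruence.
Qed.

Lemma sum_plus (f g : list bool -> nat) cs :
  list_sum (map (fun c => (f c + g c)%nat) cs) = (list_sum (map f cs) + list_sum (map g cs))%nat.
Proof. induction cs; simpl; lia. Qed.

Lemma sum_ind d cs : NoDup cs -> In d cs ->
  list_sum (map (fun c => if list_eq_dec Bool.bool_dec d c then 1%nat else 0%nat) cs) = 1%nat.
Proof.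
  induction cs as [|a cs IH]; intros Hd Hin. destruct Hin.
  inversion Hd; subst. simpl.
  destruct (list_eq_dec Bool.bool_dec d a).
  - subst. assert (list_sum (map (fun c => if list_eq_dec Bool.bool_dec a c then 1%nat else 0%nat) cs) = 0%nat).
    { clear IH Hd Hin. induction cs; simpl; auto.
      destruct (list_eq_dec Bool.bool_dec a a0). subst; exfalso; apply H1; left; auto.
      rewrite IHcs; auto. intro; apply H1; right; auto. inversion H2; auto. }
    lia.
  - destruct Hin. congruence. rewrite IH; auto.
Qed.

Lemma count_sum F cs l : NoDup cs -> (forall x, In x l -> In (F x) cs) ->
  length l = list_sum (map (fun c => length (clf F c l)) cs).
Proof.
  intros Hd. induction l as [|x l IH]; intros Hin.
  - simpl. clear Hd Hin. induction cs; simpl; auto.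
  - transitivity (list_sum (map (fun c => ((if list_eq_dec Bool.bool_dec (F x) c then 1 else 0) + length (clf F c l))%nat) cs)).
    + rewrite sum_plus, sum_ind, <- IH; auto. intros; apply Hin; right; auto. apply Hin; left; auto.
    + f_equal. apply map_ext. intros c. unfold clf. simpl.
      destruct (list_eq_dec Bool.bool_dec (F x) c); simpl; auto.
Qed.

Lemma sum_le (h : list bool -> nat) cs f : (forall c, In c cs -> (h c <= f)%nat) ->
  (list_sum (map h cs) <= length cs * f)%nat.
Proof.
  induction cs; simpl; intros H. lia.
  specialize (H a (or_introl eq_refl)) as H0. assert (IH := IHcs (fun c Hc => H c (or_intror Hc))). lia.
Qed.

Lemma sum_lt (h : list bool -> nat) cs f : (forall c, In c cs -> (h c <= f)%nat) ->
  (exists c, In c cs /\ (h c < f)%nat) ->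
  (list_sum (map h cs) + 1 <= length cs * f)%nat.
Proof.
  induction cs; simpl; intros H [c [Hc Hl]]. destruct Hc.
  destruct Hc as [Hc|Hc].
  - subst. pose proof (sum_le h cs f (fun c Hc => H c (or_intror Hc))). lia.
  - specialize (H a (or_introl eq_refl)) as H0.
    assert (IH := IHcs (fun c Hc => H c (or_intror Hc)) (ex_intro _ c (conj Hc Hl))). lia.
Qed.

Lemma Rceil_ge x : x <= IZR (Rceil x).
Proof. unfold Rceil. rewrite minus_IZR. destruct (archimed (-x)). lra. Qed.
Lemma Rceil_lt x : IZR (Rceil x) < x + 1.
Proof. unfold Rceil. rewrite minus_IZR. destruct (archimed (-x)). lra. Qed.

Lemma inRn0_eq x : inRn 0 x -> x = fun _ => 0.
Proof. intros H. apply functional_extensionality; intro i. apply H. lia. Qed.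

Lemma count_bound n K gi lI lK :
  convex_body n K -> strictly_convex n K -> NoDup lI -> length lI = gi ->
  (forall x, In x lI <-> lattice_point n x /\ int_pts n K x) ->
  NoDup lK -> (forall x, In x lK <-> lattice_point n x /\ K x) ->
  (1 <= n)%nat ->
  (forall h, gi = (2*h)%nat -> (length lK <= 2^n*(h+1))%nat) /\
  (forall h, gi = (2*h+1)%nat -> (length lK + 1 <= 2^n*(h+2))%nat).
Proof.
  intros HK Hsc HdI HlI HinI HdK HinK Hn.
  set (F := fun x => codeF x n).
  set (cs := all_codes n).
  assert (Hcnt : length lK = list_sum (map (fun c => length (clf F c lK)) cs)).
  { apply count_sum. apply all_codes_nodup. intros x _. apply all_codes_in. apply codeF_len. }
  assert (Hcl : forall c, NoDup (clf F c lK) /\ (forall x, In x (clf F c lK) -> lattice_point n x /\ K x)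
     /\ (forall x y, In x (clf F c lK) -> In y (clf F c lK) -> codeF x n = codeF y n)).
  { intros c. split. apply NoDup_filter; auto. split.
    - intros x Hx. apply clf_in in Hx. apply HinK. apply Hx.
    - intros x y Hx Hy. apply clf_in in Hx, Hy. unfold F in *. destruct Hx, Hy. congruence. }
  assert (Hb : forall c, (2 * length (clf F c lK) <= gi + 3)%nat).
  { intros c. destruct (Hcl c) as [A [B C]]. apply (class_bound n K gi lI); auto. }
  split; intros h Hh.
  -     pose proof (sum_le (fun c => length (clf F c lK)) cs (h+1)) as Ssum.
    unfold cs in Ssum; rewrite all_codes_len in Ssum. rewrite Hcnt.
    assert (list_sum (map (fun c => length (clf F c lK)) cs) <= 2 ^ n * (h + 1))%nat.
    { apply Ssum. intros c _. specialize (Hb c). lia. }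
    lia.
  -     pose proof (sum_lt (fun c => length (clf F c lK)) cs (h+2)) as Ssum.
    unfold cs in Ssum; rewrite all_codes_len in Ssum. rewrite Hcnt.
    assert (list_sum (map (fun c => length (clf F c lK)) cs) + 1 <= 2 ^ n * (h + 2))%nat.
    2:{ lia. }
    apply Ssum. { intros c _. specialize (Hb c). lia. }
    apply NNPP. intro Hno.
    assert (Hfull : forall c, length c = n -> length (clf F c lK) = (h+2)%nat).
    { intros c Hc. specialize (Hb c). destruct (Nat.eq_dec (length (clf F c lK)) (h+2)); auto.
      exfalso. apply Hno. exists c. split. apply all_codes_in; auto. lia. }
    destruct (Nat.eq_dec h 0) as [H0|H0].
    + subst h. simpl in Hh. rewrite Hh in HlI.
      destruct lI as [|p [|q r]]; simpl in HlI; try lia.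
      assert (Hp : lattice_point n p /\ int_pts n K p) by (apply HinI; left; auto).
      assert (HpK : In p (clf F (F p) lK)).
      { apply clf_in. split; auto. apply HinK. split. apply Hp. apply int_K with n. apply Hp. }
      pose proof (Hfull (F p) (codeF_len p n)) as L2. simpl in L2.
      destruct (Hcl (F p)) as [A [B C]].
      assert (exists x, In x (clf F (F p) lK) /\ x <> p) as [x [Hx Hxp]].
      { apply NNPP; intro N. assert (Hi : incl (clf F (F p) lK) [p]).
        { intros y Hy. left. apply NNPP; intro E. apply N. exists y. split; auto. }
        pose proof (NoDup_incl_length A Hi) as Hl. simpl in Hl. lia. }
      assert (H1 : In (mid x p) [p]).
      { apply HinI. split.
        - apply same_code_lattice. apply B; auto. apply Hp. apply C; auto.
        - apply mid_int; auto. apply B; auto. apply int_K with n; apply Hp. }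
      destruct H1 as [H1|[]]. apply Hxp. apply functional_extensionality; intro i.
      apply (f_equal (fun f => f i)) in H1. unfold mid, seg in H1. lra.
    + destruct n as [|n']. lia.
      set (c1 := true :: repeat true n'). set (c2 := false :: repeat true n').
      assert (L1 : length c1 = S n') by (unfold c1; simpl; rewrite repeat_length; auto).
      assert (L2 : length c2 = S n') by (unfold c2; simpl; rewrite repeat_length; auto).
      assert (Hz : forall c, length c = S n' -> exists s, StronglySorted (ltl (S n')) s /\
         (forall y, In y s <-> In y (clf F c lK)) /\ length s = (h+2)%nat /\
         StronglySorted (ltl (S n')) (zz s) /\ (forall x, In x (zz s) <-> In x lI)).
      { intros c Lc. destruct (Hcl c) as [A [B C]]. pose proof (Hfull c Lc) as Lf.
        destruct (class_zz (S n') K gi lI HK Hsc HlI HinI (clf F c lK) A B C) as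
          [s [S1 [S2 [S3 [S4 [S5 S6]]]]]]. lia.
        exists s. split; auto. split; auto. split. lia. split. apply (zz_sorted _ _ S1).
        intros x. split. apply S6. apply NoDup_length_incl; auto. lia. }
      destruct (Hz c1 L1) as [s1 [T1 [T2 [T3 [T4 T5]]]]].
      destruct (Hz c2 L2) as [s2 [U1 [U2 [U3 [U4 U5]]]]].
      assert (E : zz s1 = zz s2).
      { apply (SS_eq (S n')); auto. intros x. rewrite T5, U5. tauto. }
      destruct s1 as [|a1 [|a2 [|a3 r1]]]; simpl in T3; try lia.
      destruct s2 as [|b1 [|b2 [|b3 r2]]]; simpl in U3; try lia.
      destruct (proj2 (zz_sorted _ _ (proj1 (StronglySorted_inv T1))) a2 a3 r1 eq_refl) as [t1 Et1].
      destruct (proj2 (zz_sorted _ _ (proj1 (StronglySorted_inv U1))) b2 b3 r2 eq_refl) as [t2 Et2].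
      change (zz (a1 :: a2 :: a3 :: r1)) with (mid a1 a2 :: mid a1 a3 :: zz (a2 :: a3 :: r1)) in E.
      change (zz (b1 :: b2 :: b3 :: r2)) with (mid b1 b2 :: mid b1 b3 :: zz (b2 :: b3 :: r2)) in E.
      rewrite Et1, Et2 in E. inversion E as [[E1 E2 E3 E4]].
      assert (a1 = b1).
      { apply functional_extensionality; intro i.
        apply (f_equal (fun f => f i)) in E1, E2, E3. unfold mid, seg in *. lra. }
      subst b1.
      assert (Ha : In a1 (clf F c1 lK)) by (apply T2; left; auto).
      assert (Hb' : In a1 (clf F c2 lK)) by (apply U2; left; auto).
      apply clf_in in Ha, Hb'. destruct Ha as [_ Ha]. destruct Hb' as [_ Hb'].
      unfold c1, c2 in *. congruence.
Qed.

Theorem theorem1p2 (n : nat) (K : point -> Prop) (g gi : nat) :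
  convex_body n K -> strictly_convex n K ->
  G_eq n K g -> G_eq n (int_pts n K) gi ->
  INR g <= 2 * (powerRZ 2 (Z.of_nat n - 1) - 1)
             * IZR (Rceil (2 / 3 * (INR gi + 1))) + INR gi + 2.
Proof.
  intros HK Hsc [lK [HdK [HlenK HinK]]] [lI [HdI [HlenI HinI]]].
  pose proof (Rceil_ge (2 / 3 * (INR gi + 1))) as C1.
  pose proof (Rceil_lt (2 / 3 * (INR gi + 1))) as C2.
  set (z := Rceil (2 / 3 * (INR gi + 1))) in *.
  rewrite INR_IZR_INZ in C1, C2.
  assert (Z1 : (2 * Z.of_nat gi + 2 <= 3 * z)%Z).
  { apply le_IZR. rewrite plus_IZR, !mult_IZR. lra. }
  assert (Z2 : (3 * z < 2 * Z.of_nat gi + 5)%Z).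
  { apply lt_IZR. rewrite plus_IZR, !mult_IZR. lra. }
  destruct n as [|n'].
  - assert (Hg : (g <= 1)%nat).
    { subst g. assert (incl lK [fun _ => 0]).
      { intros x Hx. left. symmetry. apply inRn0_eq. apply HinK in Hx. apply Hx. }
      pose proof (NoDup_incl_length HdK H). simpl in H0. lia. }
    assert (Hgi : (gi <= 1)%nat).
    { subst gi. assert (incl lI [fun _ => 0]).
      { intros x Hx. left. symmetry. apply inRn0_eq. apply HinI in Hx. apply Hx. }
      pose proof (NoDup_incl_length HdI H). simpl in H0. lia. }
    assert (Ez : z = (Z.of_nat gi + 1)%Z) by lia.
    replace (powerRZ 2 (Z.of_nat 0 - 1)) with (/2) by (simpl; field).
    rewrite Ez, plus_IZR, <- INR_IZR_INZ.
    apply le_INR in Hg. apply le_INR in Hgi. simpl in Hg, Hgi. lra.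
  - destruct (count_bound (S n') K gi lI lK HK Hsc HdI HlenI HinI HdK HinK) as [Ev Od]. lia.
    replace (powerRZ 2 (Z.of_nat (S n') - 1)) with (2 ^ n').
    2:{ rewrite pow_powerRZ. replace (Z.of_nat (S n') - 1)%Z with (Z.of_nat n') by lia. reflexivity. }
    assert (EN : 2 * 2 ^ n' = INR (2 ^ S n')) by (rewrite pow_INR; replace (INR 2) with 2 by (simpl; ring); rewrite <- tech_pow_Rmult; ring).
    assert (N2 : (2 <= 2 ^ S n')%nat).
    { simpl. pose proof (Nat.pow_le_mono_r 2 0 n'). simpl in H. lia. }
    destruct (Nat.Even_or_Odd gi) as [[h Hh]|[h Hh]].
    + pose proof (Ev h Hh) as B. subst g.
      assert (Zf : (Z.of_nat h + 1 <= z)%Z) by lia.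
      apply IZR_le in Zf. rewrite plus_IZR, <- INR_IZR_INZ in Zf.
      apply le_INR in B. apply le_INR in N2. rewrite mult_INR, plus_INR in B.
      rewrite Hh, mult_INR.
      set (N := INR (2 ^ S n')) in *.
      replace (INR 2) with 2 in * by (simpl; ring). replace (INR 1) with 1 in * by reflexivity.
      assert ((N - 2) * (INR h + 1) <= (N - 2) * IZR z) by (apply Rmult_le_compat_l; lra).
      replace (2 * (2 ^ n' - 1)) with (N - 2) by lra. lra.
    + pose proof (Od h Hh) as B. subst g.
      assert (Zf : (Z.of_nat h + 2 <= z)%Z) by lia.
      apply IZR_le in Zf. rewrite plus_IZR, <- INR_IZR_INZ in Zf.
      apply le_INR in B. apply le_INR in N2. rewrite !plus_INR, mult_INR, plus_INR in B.
      rewrite Hh, plus_INR, mult_INR.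
      set (N := INR (2 ^ S n')) in *.
      replace (INR 2) with 2 in * by (simpl; ring). replace (INR 1) with 1 in * by reflexivity.
      assert ((N - 2) * (INR h + 2) <= (N - 2) * IZR z) by (apply Rmult_le_compat_l; lra).
      replace (2 * (2 ^ n' - 1)) with (N - 2) by lra. lra.
Qed.
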